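(* Let $C$ and $Q_1,\dots,Q_k$ ($k\ge0$) be subsets of $\{1,\dots,n\}$, let $W_i\subseteq Q_i$ for $1\le i\le k$, and let $Q=\bigcup_{i=1}^kQ_i$. Let $A_1,\dots,A_r\subseteq\{1,\dots,k\}$ ($r\le k$) be pairwise disjoint, and let $G_j=\bigcup_{i\in A_j}W_i$ for $1\le j\le r$. Let $R$ be any subset of $Q\setminus\bigcup_{j=1}^rG_j$. For a given joint distribution of $X_1,\dots,X_n$, if $K_1=(C,\langle Q_i,1\le i\le k\rangle)$ is valid, then $K_2(R)=(C\cup R,\langle G_j,1\le j\le r\rangle)$ is valid.
   Context: $X_1,\dots,X_n$ are jointly distributed discrete random variables with $H(X_i)<\infty$; $X_\alpha=(X_i,i\in\alpha)$, $X_\emptyset$ is a constant. A CMI $(C,\langle Q_1,\dots,Q_k\rangle)$ (with $C\subseteq\{1,\dots,n\}$ and an unordered multiset of subsets $Q_i$) is valid for a given distribution if $\sum_{i=1}^kH(X_{Q_i}|X_C)-H(X_{Q_1},\dots,X_{Q_k}|X_C)=0$, i.e., $X_{Q_1},\dots,X_{Q_k}$ are mutually independent conditioning on $X_C$ (automatically true when $k\le1$). *)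

(* Defs.v *)
From HB Require Import structures.
From mathcomp Require Import all_boot all_order all_algebra.
From mathcomp Require Import classical_sets boolp reals constructive_ereal ereal esum exp.
Set Implicit Arguments. Unset Strict Implicit. Unset Printing Implicit Defensive.
Import Order.TTheory GRing.Theory Num.Theory.
Local Open Scope classical_set_scope.
Local Open Scope ring_scope.

(* A joint outcome of X_1,...,X_n: a vector of values in a common countable
   alphabet T (indices are 'I_n, i.e. {0,...,n-1}). *)
Definition outcome (n : nat) (T : countType) := {ffun 'I_n -> T}.

Definition is_pmf (R : realType) (n : nat) (T : countType)
  (p : outcome n T -> R) : Prop :=
  (forall x, 0 <= p x) /\ (\esum_(x in [set: outcome n T]) (p x)%:E = 1%E).

Definition prob (R : realType) (n : nat) (T : countType)
  (p : outcome n T -> R) (E : set (outcome n T)) : R :=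
  fine (\esum_(x in E) (p x)%:E).

Definition agree (n : nat) (T : countType) (alpha : {set 'I_n})
  (y : outcome n T) : set (outcome n T) :=
  [set x | forall i, i \in alpha -> x i = y i].

(* The CMI (C, <Q_1,...,Q_k>) is valid for p: X_{Q_1},...,X_{Q_k} are
   mutually independent conditionally on X_C, i.e. for all values c of X_C
   and a_i of X_{Q_i}:
     P(c, a_1,...,a_k) * P(c)^k = P(c) * prod_i P(c, a_i)
   (the denominator-free form of P(a_1..a_k | c) = prod_i P(a_i | c) whenever
   P(c) > 0; it is trivially true when k <= 1). *)
Definition cmi_valid (R : realType) (n : nat) (T : countType)
  (p : outcome n T -> R) (C : {set 'I_n}) (k : nat)
  (Q : 'I_k -> {set 'I_n}) : Prop :=
  forall (c : outcome n T) (a : 'I_k -> outcome n T),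
    prob p (agree C c `&` [set x | forall i, agree (Q i) (a i) x])
      * prob p (agree C c) ^+ k
    = prob p (agree C c) * \prod_(i < k) prob p (agree C c `&` agree (Q i) (a i)).

(* Shannon entropy (natural log) of the single variable X_i, as an extended
   real; ln 0 = 0 in MathComp-Analysis so 0 ln 0 = 0. *)
Definition entropy1 (R : realType) (n : nat) (T : countType)
  (p : outcome n T -> R) (i : 'I_n) : \bar R :=
  \esum_(v in [set: T])
     (- (prob p [set x | x i = v] * ln (prob p [set x | x i = v])))%:E.

Definition finite_entropies (R : realType) (n : nat) (T : countType)
  (p : outcome n T -> R) : Prop :=
  forall i : 'I_n, (entropy1 p i < +oo)%E.

(* Main.v *)
Require Import Defs.
From HB Require Import structures.
From mathcomp Require Import all_boot all_order all_algebra.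
From mathcomp Require Import classical_sets boolp reals constructive_ereal ereal esum exp fsbigop functions.
From mathcomp Require Import ring.
Set Implicit Arguments. Unset Strict Implicit. Unset Printing Implicit Defensive.
Import Order.TTheory GRing.Theory Num.Theory.
Section Helpers.
Local Open Scope classical_set_scope.
Local Open Scope ring_scope.

Section S.
Variables (R : realType) (n : nat) (T : countType) (p : outcome n T -> R).
Hypothesis p0 : forall x, 0 <= p x.

Definition meas (Q : {set 'I_n}) (F : set (outcome n T)) :=
  forall x y : outcome n T, (forall i, i \in Q -> x i = y i) -> F x -> F y.
Definition merge (Q : {set 'I_n}) (x d : outcome n T) : outcome n T :=
  [ffun i => if i \in Q then x i else d i].

Lemma partition Q F (d : outcome n T) X : meas Q F ->
  \esum_(x in X `&` F) (p x)%:E =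
  \esum_(b in [set b | F b /\ forall i, i \notin Q -> b i = d i])
     \esum_(x in X `&` agree Q b) (p x)%:E.
Proof.
move=> mF; rewrite esum_esum; last by move=> *; rewrite lee_fin.
apply: (reindex_esum _ _ snd); split.
- move=> [b x] /= [[Fb _] [Xx ax]]; split => //.
  by apply: (mF b) => // i iQ; rewrite ax.
- move=> [b x] [b' x'] /set_mem [/= [Fb db] [Xx ax]] /set_mem [/= [Fb' db'] [Xx' ax']] /= ex.
  subst x'; congr pair; apply/ffunP => i.
  by case: (boolP (i \in Q)) => iQ; [rewrite -ax // -ax' | rewrite db // db'].
- move=> x [Xx Fx]; exists (merge Q x d, x) => //; split => /=.
  + split; first by apply: (mF x) => // i iQ; rewrite /merge ffunE iQ.
    by move=> i iQ; rewrite /merge ffunE (negPf iQ).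
  + by split => // i iQ; rewrite /merge ffunE iQ.
Qed.


Lemma esumZ (I : choiceType) (S : set I) (a : I -> \bar R) (c : R) :
  (0 <= c) -> (forall i, (0 <= a i)%E) ->
  \esum_(i in S) (c%:E * a i)%E = (c%:E * \esum_(i in S) a i)%E.
Proof.
move=> c0 a0; rewrite /esum -ereal_supZl //; last first.
  by apply/set0P; exists 0%E; exists set0; [exact: fsets_set0|rewrite fsbig_set0].
congr ereal_sup; rewrite image_comp; apply: eq_imagel => A _ /=.
by rewrite ge0_mule_fsumr.
Qed.

Hypothesis hp : is_pmf p.

Lemma esum_fin (E : set (outcome n T)) :
  \esum_(x in E) (p x)%:E = (prob p E)%:E.
Proof.
case: hp => _ p1.
have g0 : (0 <= \esum_(x in E) (p x)%:E)%E by apply: esum_ge0 => x _; rewrite lee_fin.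
have le1 : (\esum_(x in E) (p x)%:E <= 1)%E.
  rewrite -p1 esum_mkcond [leRHS]esum_mkcond; apply: le_esum => x _.
  case: ifP => _; rewrite ?in_setT //; by rewrite lee_fin.
rewrite /prob fineK // ge0_fin_numE //; exact: (le_lt_trans le1 (ltry _)).
Qed.

Lemma prob_ge0 E : 0 <= prob p E.
Proof. by rewrite /prob fine_ge0 // esum_ge0 // => x _; rewrite lee_fin. Qed.

Lemma prob_le E F : E `<=` F -> prob p E <= prob p F.
Proof.
move=> EF; rewrite -lee_fin -!esum_fin esum_mkcond [leRHS]esum_mkcond.
apply: le_esum => x _; case: ifP => xE; rewrite ?(ifT _ _ (mem_set (EF _ (set_mem xE)))) //.
by case: ifP => _; rewrite lee_fin.
Qed.

Variables (C : {set 'I_n}) (k : nat) (Q : 'I_k -> {set 'I_n}).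
Hypothesis hv : cmi_valid p C Q.
Variable c : outcome n T.
Let B := agree C c.
Let m := prob p B.

Lemma gf_t t : forall F : 'I_k -> set (outcome n T),
  (forall i, meas (Q i) (F i)) ->
  (forall i : 'I_k, (t <= i)%N -> exists a, F i = agree (Q i) a) ->
  prob p (B `&` [set x | forall i, F i x]) * m ^+ k
  = m * \prod_(i < k) prob p (B `&` F i).
Proof.
elim: t => [|t IH] F mF hat.
  have [a Ha] : {a : 'I_k -> outcome n T & forall i, F i = agree (Q i) (a i)}.
    by apply: (@choice _ _ (fun i a => F i = agree (Q i) a)) => i; apply: hat.
  have -> : F = fun i => agree (Q i) (a i) by apply: funext.
  exact: hv.
case: (ltnP t k) => tk; last first.
  apply: IH => // i ti; exfalso; move: (ltn_ord i); rewrite ltnNge.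
  by rewrite (leq_trans tk ti).
pose i0 : 'I_k := Ordinal tk.
pose X := B `&` [set x | forall i, i != i0 -> F i x].
pose Fb b := fun i => if i == i0 then agree (Q i0) b else F i.
pose K := m * \prod_(i < k | i != i0) prob p (B `&` F i).
have K0 : 0 <= K by rewrite mulr_ge0 ?prob_ge0 // prodr_ge0 // => *; exact: prob_ge0.
have mk0 : 0 <= m ^+ k by rewrite exprn_ge0 // prob_ge0.
have eA : B `&` [set x | forall i, F i x] = X `&` F i0.
  apply/seteqP; split => x /=.
    by move=> [Bx Fx]; split => //; split => // i _; apply: Fx.
  move=> [[Bx Fx] F0]; split => // i; case: (eqVneq i i0) => [->|ne] //.
  exact: Fx.
have eB b : X `&` agree (Q i0) b = B `&` [set x | forall i, Fb b i x].
  apply/seteqP; split => x /=.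
    move=> [[Bx Fx] ax]; split => // i; rewrite /Fb; case: (eqVneq i i0) => [_|ne] //.
    exact: Fx.
  move=> [Bx Fx]; split.
    by split => // i ne; move: (Fx i); rewrite /Fb (negPf ne).
  by move: (Fx i0); rewrite /Fb eqxx.
have IHb b : prob p (B `&` [set x | forall i, Fb b i x]) * m ^+ k
             = K * prob p (B `&` agree (Q i0) b).
  rewrite IH; last 2 first.
  - move=> i; rewrite /Fb; case: eqP => [->|_]; last exact: mF.
    by move=> x y exy ax j jQ; rewrite -exy //; apply: ax.
  - move=> i ti; rewrite /Fb; case: eqP => [->|ne]; first by exists b.
    apply: hat; rewrite ltn_neqAle ti andbT; apply/negP => /eqP e.
    by apply: ne; apply: val_inj.
  rewrite (bigD1 i0) //= /Fb eqxx /K.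
  rewrite -mulrA; congr (_ * _); rewrite mulrC; congr (_ * _).
  by apply: eq_bigr => i /negPf ->.
rewrite (bigD1 i0) //= mulrA (mulrC m) -mulrA -/K [RHS]mulrC.
suff : (prob p (B `&` [set x | forall i, F i x]) * m ^+ k)%:E =
       (K * prob p (B `&` F i0))%:E by case.
rewrite eA EFinM (EFinM K) -(esum_fin (X `&` F i0)) -(esum_fin (B `&` F i0)) (partition c X (mF i0)) (partition c B (mF i0)).
rewrite muleC -esumZ //; last by move=> b; apply: esum_ge0 => *; rewrite lee_fin.
rewrite -esumZ //; last by move=> b; apply: esum_ge0 => *; rewrite lee_fin.
apply: eq_esum => b _; rewrite !esum_fin -!EFinM eB mulrC IHb //.
Qed.

Lemma gf F : (forall i, meas (Q i) (F i)) ->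
  prob p (agree C c `&` [set x | forall i, F i x]) * prob p (agree C c) ^+ k
  = prob p (agree C c) * \prod_(i < k) prob p (agree C c `&` F i).
Proof.
move=> mF; apply: (@gf_t k) => // i ki; exfalso; move: (ltn_ord i).
by rewrite ltnNge ki.
Qed.
End S.

Lemma meas_agree n (T : countType) (S Q : {set 'I_n}) (a : outcome n T) :
  S \subset Q -> meas Q (agree S a).
Proof.
move=> SQ x y exy ax u uS; rewrite -exy; [exact: ax u uS | exact: (fintype.subsetP SQ u uS)].
Qed.

Lemma meas_and n (T : countType) (Q : {set 'I_n}) (F G : set (outcome n T)) :
  meas Q F -> meas Q G -> meas Q (F `&` G).
Proof. by move=> mF mG x y exy [Fx Gx]; split; [exact: (mF x)|exact: (mG x)]. Qed.

End Helpers.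

Theorem mainTheorem12 (R : realType) (n : nat) (T : countType)
  (p : outcome n T -> R) (C : {set 'I_n}) (k : nat)
  (Q W : 'I_k -> {set 'I_n}) (r : nat) (A : 'I_r -> {set 'I_k})
  (Rs : {set 'I_n}) :
  is_pmf p ->
  finite_entropies p ->
  (forall i, W i \subset Q i) ->
  (r <= k)%N ->
  (forall j j', j != j' -> [disjoint A j & A j']) ->
  Rs \subset (\bigcup_(i < k) Q i) :\: \bigcup_(j < r) \bigcup_(i in A j) W i ->
  cmi_valid p C Q ->
  cmi_valid p (C :|: Rs) (fun j : 'I_r => \bigcup_(i in A j) W i).
Proof.
move=> hp _ WQ _ Adisj RsS hv c g.
Local Open Scope classical_set_scope.
Local Open Scope ring_scope.
have p0 : forall x, 0 <= p x by case: hp.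
pose B := agree C c.
pose m := prob p B.
pose E' i := agree (Rs :&: Q i) c.
pose E i := E' i `&` [set x | forall j, i \in A j -> agree (W i) (g j) x].
pose Ej j i := E' i `&` [set x | i \in A j -> agree (W i) (g j) x].
have mE' i : meas (Q i) (E' i) by apply: meas_agree; exact: finset.subsetIr.
have mW i j : meas (Q i) (agree (W i) (g j)) by apply: meas_agree.
have mE i : meas (Q i) (E i).
  apply: meas_and => // x y exy /= H j ij; exact: (mW i j x y exy (H j ij)).
have mEj j i : meas (Q i) (Ej j i).
  apply: meas_and => // x y exy /= H ij; exact: (mW i j x y exy (H ij)).
have s2 : agree (C :|: Rs) c = B `&` [set x | forall i, E' i x].
  apply/seteqP; split => x /=.
    move=> H; split; first by move=> u uC; apply: H; rewrite inE uC.
    by move=> i u /setIP [uR _]; apply: H; rewrite inE uR orbT.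
  move=> [Bx H] u; rewrite inE => /orP [uC|uR]; first exact: Bx.
  have := fintype.subsetP RsS u uR; rewrite inE => /andP [_ /bigcupP [i _ uQ]].
  by apply: (H i); rewrite inE uR uQ.
have aG j x : agree (\bigcup_(i in A j) W i)%SET (g j) x <->
              (forall i, i \in A j -> agree (W i) (g j) x).
  split.
    by move=> H i ij u uW; apply: H; apply/bigcupP; exists i.
  by move=> H u /bigcupP [i ij uW]; exact: (H i ij u uW).
have s1 : agree (C :|: Rs) c `&` [set x | forall j, agree (\bigcup_(i in A j) W i)%SET (g j) x]
          = B `&` [set x | forall i, E i x].
  rewrite s2; apply/seteqP; split => x /=.
    move=> [[Bx H] G]; split => // i; split; first exact: H.
    by move=> j ij; apply/(aG j x).1.
  move=> [Bx H]; split; first by split => // i; case: (H i).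
  by move=> j; apply/(aG j x).2 => i ij; case: (H i) => _; apply.
have s3 j : agree (C :|: Rs) c `&` agree (\bigcup_(i in A j) W i)%SET (g j)
          = B `&` [set x | forall i, Ej j i x].
  rewrite s2; apply/seteqP; split => x /=.
    move=> [[Bx H] G]; split => // i; split; first exact: H.
    by move=> ij; apply: (aG j x).1.
  move=> [Bx H]; split; first by split => // i; case: (H i).
  by apply/(aG j x).2 => i ij; case: (H i) => _; apply.
rewrite s1 (eq_bigr _ (fun j _ => congr1 (prob p) (s3 j))) s2.
set X := prob p (B `&` _); set Y := prob p (B `&` [set x | forall i, E' i x]).
have gX := gf p0 hp hv c mE.
have gY := gf p0 hp hv c mE'.
have gZ j := gf p0 hp hv c (mEj j).
rewrite -/B -/m -/X in gX; rewrite -/B -/m -/Y in gY.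
have [m0|mn0] := eqVneq m 0.
  have X0 : X = 0.
    apply/eqP; rewrite eq_le prob_ge0 // andbT -m0; apply: prob_le => // x [] //.
  have Y0 : Y = 0.
    apply/eqP; rewrite eq_le prob_ge0 // andbT -m0; apply: prob_le => // x [] //.
  by rewrite X0 Y0 !mul0r.
have uniqA i j j0 : i \in A j0 -> i \in A j -> j = j0.
  move=> ij0 ij; case: (eqVneq j j0) => // ne.
  by have := disjointFr (Adisj _ _ ne) ij; rewrite ij0.
set M := m ^+ k.
have M0 : M != 0 by rewrite expf_neq0.
apply: (mulIf (expf_neq0 r.+1 M0)).
have -> : X * Y ^+ r * M ^+ r.+1 = (X * M) * (Y * M) ^+ r by rewrite exprMn exprS; ring.
have -> : Y * (\prod_(j < r) prob p (B `&` [set x | forall i, Ej j i x])) * M ^+ r.+1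
   = (Y * M) * \prod_(j < r) (prob p (B `&` [set x | forall i, Ej j i x]) * M).
  by rewrite big_split /= prodr_const card_ord exprS; ring.
rewrite gX gY (eq_bigr _ (fun j _ => gZ j)) big_split /= prodr_const card_ord exprMn.
set PE := \prod_(i < k) _.
set PA := \prod_(i < k) prob p (agree C c `&` E' i).
set PZ := \prod_(j < r) _.
suff claim : PE * PA ^+ r = PA * PZ.
  transitivity (m * m ^+ r * (PE * PA ^+ r)); first ring.
  by rewrite claim; ring.
have -> : PA ^+ r = \prod_(j < r) PA by rewrite prodr_const card_ord.
rewrite /PA /PZ exchange_big [X in _ = _ * X]exchange_big /PE -!big_split /=.
apply: eq_bigr => i _.
case: (pickP (fun j => i \in A j)) => [j0 ij0 | none].
  rewrite (bigD1 j0) // [X in _ = _ * X](bigD1 j0) //=.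
  have -> : E i = Ej j0 i.
    apply/seteqP; split => x /= [E'x H]; split => //.
      by move=> _; apply: H.
    by move=> j ij; rewrite (uniqA _ _ _ ij0 ij); apply: H.
  have -> : \prod_(j < r | j != j0) prob p (agree C c `&` Ej j i)
          = \prod_(j < r | j != j0) prob p (agree C c `&` E' i).
    apply: eq_bigr => j ne; congr (prob p (_ `&` _)).
    apply/seteqP; split => x /=; first by case.
    move=> E'x; split => // ij; exfalso; move/eqP: ne; apply; exact: uniqA ij0 ij.
  ring.
have eE j : Ej j i = E' i.
  apply/seteqP; split => x /=; first by case.
  by move=> E'x; split => //; rewrite none.
have -> : E i = E' i.
  apply/seteqP; split => x /=; first by case.
  by move=> E'x; split => // j; rewrite none.
by rewrite (eq_bigr _ (fun j _ => congr1 (fun S => prob p (agree C c `&` S)) (eE j))).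
Qed.
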